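(* Let $K$ be a real biquadratic field with quadratic subfields $k_1=\mathbb{Q}(\sqrt{d_1})$, $k_2=\mathbb{Q}(\sqrt{d_2})$, $k_3=\mathbb{Q}(\sqrt{d_1d_2})$, whose fundamental units $\epsilon_1,\epsilon_2,\epsilon_3$ each have norm $+1$. For $i=1,2,3$ let $m_i$ be the squarefree part of the positive integer $\mathrm{Norm}_{k_i/\mathbb{Q}}(\epsilon_i+1)$. Let $E_K$ be the unit group of $K$. Then for integers $n_1,n_2,n_3$, the unit $\epsilon_1^{n_1}\epsilon_2^{n_2}\epsilon_3^{n_3}$ is a square in $E_K$ if and only if $m_1^{n_1}m_2^{n_2}m_3^{n_3}$ equals one of $1,d_1,d_2,d_1d_2$ up to the square of a rational number.
   Context: Here $d_1,d_2$ are integers such that the three fields listed are the distinct real quadratic subfields of $K$. *)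

(* Defs.v *)
From HB Require Import structures.
From mathcomp Require Import all_boot all_order all_algebra all_field.
Set Implicit Arguments. Unset Strict Implicit. Unset Printing Implicit Defensive.
Import Order.TTheory GRing.Theory Num.Theory.
Local Open Scope ring_scope.

(* All number fields are realized inside algC; sqrtC d is the positive
   real square root of d when d > 0. *)

Definition Qsqrt (d : int) (x : algC) : Prop :=
  exists a b : rat, x = ratr a + ratr b * sqrtC d%:~R.

Definition biquad (d1 d2 : int) (x : algC) : Prop :=
  exists a b c e : rat,
    x = ratr a + ratr b * sqrtC d1%:~R + ratr c * sqrtC d2%:~R
        + ratr e * (sqrtC d1%:~R * sqrtC d2%:~R).

Definition unit_of (F : algC -> Prop) (x : algC) : Prop :=
  [/\ F x, x != 0, x \in Aint & x^-1 \in Aint].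

Definition fundamental_unit (d : int) (eps : algC) : Prop :=
  [/\ unit_of (Qsqrt d) eps, 1 < eps &
      forall u, unit_of (Qsqrt d) u ->
        exists (s : bool) (n : int), u = (-1) ^+ s * eps ^ n].

Definition qnorm_is (d : int) (x : algC) (N : rat) : Prop :=
  exists a b : rat, x = ratr a + ratr b * sqrtC d%:~R /\ N = a ^+ 2 - d%:~R * b ^+ 2.

Definition squarefree (m : nat) : Prop :=
  (0 < m)%N /\ forall p, prime p -> ~~ (p * p %| m)%N.

Definition sqfree_part (N : rat) (m : nat) : Prop :=
  squarefree m /\ exists k : nat, (0 < k)%N /\ N = (m * k ^ 2)%:R.

Definition rat_square (d : int) : Prop := exists q : rat, q ^+ 2 = d%:~R.

(* Main.v *)
Require Import Defs.
From HB Require Import structures.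
From mathcomp Require Import all_boot all_order all_algebra all_field.
From mathcomp Require Import ring.
Import Order.TTheory GRing.Theory Num.Theory.
Local Open Scope ring_scope.

Lemma indep1 (d : int) : ~ rat_square d -> forall a b : rat,
  ratr a + ratr b * sqrtC d%:~R = 0 :> algC -> a = 0 /\ b = 0.
Proof.
move=> nsq a b H.
have [b0|b0] := eqVneq b 0.
  subst b; move: H; rewrite rmorph0 mul0r addr0 => /eqP; rewrite fmorph_eq0 => /eqP.
  by [].
exfalso; apply: nsq; exists (- a / b).
have hs : sqrtC d%:~R = ratr (- a / b) :> algC.
  have hb : ratr b != 0 :> algC by rewrite fmorph_eq0.
  apply: (mulfI hb); rewrite fmorph_div rmorphN.
  rewrite mulrCA divff // mulr1; move/eqP: H; rewrite addrC addr_eq0 => /eqP ->.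
  by [].

apply: (@fmorph_inj _ _ (@ratr algC)).
move: (congr1 (fun x => x ^+ 2) hs); rewrite /= sqrtCK rmorphXn => <-; by rewrite rmorph_int.
Qed.

Lemma rat_sq_div (d : int) (x y : rat) : y != 0 -> x ^+ 2 = y ^+ 2 * d%:~R -> rat_square d.
Proof.
move=> y0 h; exists (x / y); rewrite expr_div_n h.
by field.
Qed.

Lemma indep4 (d1 d2 : int) : ~ rat_square d1 -> ~ rat_square d2 -> ~ rat_square (d1 * d2) ->
  forall a b c e : rat,
  ratr a + ratr b * sqrtC d1%:~R + ratr c * sqrtC d2%:~R
    + ratr e * (sqrtC d1%:~R * sqrtC d2%:~R) = 0 :> algC ->
  [/\ a = 0, b = 0, c = 0 & e = 0].
Proof.
move=> nsq1 nsq2 nsq3 a b c e H.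
set s1 := sqrtC d1%:~R in H *; set s2 := sqrtC d2%:~R in H *.
have hs1 : s1 ^+ 2 = d1%:~R by rewrite sqrtCK.
have hs2 : s2 ^+ 2 = d2%:~R by rewrite sqrtCK.
pose p := a * c - b * e * d1%:~R; pose q := b * c - a * e; pose D := c ^+ 2 - e ^+ 2 * d1%:~R.
have H1 : ratr p + ratr q * s1 + ratr D * s2 = 0 :> algC.
  rewrite -(mulr0 (ratr c - ratr e * s1)) -H /p /q /D; ring: hs1.
have hD : D = 0.
  have [//|D0] := eqVneq D 0; exfalso.
  have E : ratr D * s2 = - (ratr p + ratr q * s1) :> algC.
    by apply/eqP; rewrite -addr_eq0 [X in X == _]addrC H1.
  have [h0 h1] : p ^+ 2 + q ^+ 2 * d1%:~R - D ^+ 2 * d2%:~R = 0 /\ 2 * p * q = 0.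
    apply: (@indep1 d1 nsq1 (p ^+ 2 + q ^+ 2 * d1%:~R - D ^+ 2 * d2%:~R) (2 * p * q)).
    rewrite -/s1 -(subrr ((ratr p + ratr q * s1) ^+ 2)).
    rewrite -[X in _ = _ - X]sqrrN -E. ring: hs1 hs2.
  move/eqP: h1; rewrite !mulf_eq0 /= => /orP[/eqP p0|/eqP q0].
  - apply: nsq3; apply: (@rat_sq_div _ (q * d1%:~R) D D0).
    move: h0; rewrite p0 => /eqP; rewrite subr_eq0 => /eqP h0.
    have -> : D ^+ 2 * (d1 * d2)%:~R = D ^+ 2 * d2%:~R * d1%:~R by rewrite intrM; ring.
    rewrite -h0; ring.
  - apply: nsq2; apply: (@rat_sq_div _ p D D0).
    move: h0; rewrite q0 => /eqP; rewrite subr_eq0 => /eqP <-; ring.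
have e0 : e = 0.
  have [//|e0] := eqVneq e 0; exfalso; apply: nsq1; apply: (@rat_sq_div _ c e e0).
  by move/eqP: hD; rewrite subr_eq0 => /eqP.
move: hD; rewrite /D e0 expr0n /= mul0r subr0 => /eqP; rewrite expf_eq0 /= => /eqP c0.
move: H; rewrite e0 c0 !rmorph0 !mul0r !addr0 => /(@indep1 d1 nsq1 a b) [a0 b0].
by [].
Qed.

Section K.
Variables d1 d2 : int.
Hypotheses (nsq1 : ~ rat_square d1) (nsq2 : ~ rat_square d2) (nsq3 : ~ rat_square (d1 * d2)).
Let s1 : algC := sqrtC d1%:~R.
Let s2 : algC := sqrtC d2%:~R.
Let hs1 : s1 ^+ 2 = d1%:~R. Proof. by rewrite sqrtCK. Qed.
Let hs2 : s2 ^+ 2 = d2%:~R. Proof. by rewrite sqrtCK. Qed.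

Lemma K_rat r : biquad d1 d2 (ratr r).
Proof. by exists r, 0, 0, 0; rewrite /s1 /s2; ring. Qed.

Lemma K_s1 : biquad d1 d2 s1.
Proof. by exists 0, 1, 0, 0; rewrite /s1 /s2; ring. Qed.

Lemma K_s2 : biquad d1 d2 s2.
Proof. by exists 0, 0, 1, 0; rewrite /s1 /s2; ring. Qed.

Lemma K_s12 : biquad d1 d2 (s1 * s2).
Proof. by exists 0, 0, 0, 1; rewrite /s1 /s2; ring. Qed.

Lemma K_add x y : biquad d1 d2 x -> biquad d1 d2 y -> biquad d1 d2 (x + y).
Proof.
move=> [a [b [c [e ->]]]] [a' [b' [c' [e' ->]]]].
exists (a + a'), (b + b'), (c + c'), (e + e'); rewrite !rmorphD; ring.
Qed.

Lemma K_mul x y : biquad d1 d2 x -> biquad d1 d2 y -> biquad d1 d2 (x * y).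
Proof.
move=> [a [b [c [e ->]]]] [a' [b' [c' [e' ->]]]].
exists (a * a' + b * b' * d1%:~R + c * c' * d2%:~R + e * e' * d1%:~R * d2%:~R),
  (a * b' + b * a' + (c * e' + e * c') * d2%:~R),
  (a * c' + c * a' + (b * e' + e * b') * d1%:~R),
  (a * e' + e * a' + b * c' + c * b').
rewrite -/s1 -/s2; ring: hs1 hs2.
Qed.

Lemma K_inv x : biquad d1 d2 x -> biquad d1 d2 x^-1.
Proof.
have [->|x0] := eqVneq x 0; first by rewrite invr0; exists 0, 0, 0, 0; ring.
move=> [a [b [c [e Dx]]]].
pose g0 := a ^+ 2 + b ^+ 2 * d1%:~R - d2%:~R * (c ^+ 2 + e ^+ 2 * d1%:~R).
pose g1 := 2 * a * b - 2 * d2%:~R * c * e.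
pose dl := g0 ^+ 2 - g1 ^+ 2 * d1%:~R.
pose sg1 := ratr a + ratr (- b) * s1 + ratr c * s2 + ratr (- e) * (s1 * s2).
pose sg2 := ratr a + ratr b * s1 + ratr (- c) * s2 + ratr (- e) * (s1 * s2).
pose sg3 := ratr a + ratr (- b) * s1 + ratr (- c) * s2 + ratr e * (s1 * s2).
have Kf a' b' c' e' : biquad d1 d2 (ratr a' + ratr b' * s1 + ratr c' * s2 + ratr e' * (s1 * s2)).
  by exists a', b', c', e'.
have hxy : x * (sg1 * sg2 * sg3) = ratr dl.
  rewrite Dx /sg1 /sg2 /sg3 /dl /g0 /g1 -/s1 -/s2 !rmorphN. ring: hs1 hs2.
have sg_nz a' b' c' e' : ratr a' + ratr b' * s1 + ratr c' * s2 + ratr e' * (s1 * s2) = 0 ->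
    a' = 0 /\ b' = 0 /\ c' = 0 /\ e' = 0.
  by move/(@indep4 d1 d2 nsq1 nsq2 nsq3 a' b' c' e') => [-> -> -> ->].
have dl0 : dl != 0.
  apply/eqP => dl0; move: hxy; rewrite dl0 rmorph0 => /eqP; rewrite !mulf_eq0 (negPf x0) /=.
  move: x0; rewrite Dx => /eqP x0.
  case/orP => [/orP[]|] /eqP /sg_nz [a0 [b0 [c0 e0]]]; apply: x0;
    move: b0 c0 e0; rewrite ?oppr_eq0 => /eqP; rewrite ?oppr_eq0 => /eqP b0 /eqP;
    rewrite ?oppr_eq0 => /eqP c0 /eqP; rewrite ?oppr_eq0 => /eqP e0;
    by rewrite a0 b0 c0 e0 !rmorph0 !mul0r !addr0.
have -> : x^-1 = sg1 * sg2 * sg3 * ratr (dl^-1).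
  apply: (mulfI x0); rewrite mulrV ?unitfE // mulrA hxy fmorphV mulrV //.
  by rewrite unitfE fmorph_eq0.
by apply: K_mul; [apply: K_mul; [apply: K_mul|]|apply: K_rat]; apply: Kf.
Qed.

Lemma K_exprn x n : biquad d1 d2 x -> biquad d1 d2 (x ^+ n).
Proof.
move=> hx; elim: n => [|n IH]; first by rewrite expr0; exists 1, 0, 0, 0; ring.
by rewrite exprS; apply: K_mul.
Qed.

Lemma K_exprz x (n : int) : biquad d1 d2 x -> biquad d1 d2 (x ^ n).
Proof.
move=> hx; case: n => n; first exact: K_exprn.
by apply: K_inv; apply: K_exprn.
Qed.

End K.

Lemma key_sq (d1 d2 : int) : ~ rat_square d1 -> ~ rat_square d2 -> ~ rat_square (d1 * d2) ->
  forall (r : rat) (w : algC), biquad d1 d2 w -> ratr r = w ^+ 2 ->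
  exists c : int, c \in [:: 1; d1; d2; d1 * d2] /\ exists q : rat, r = c%:~R * q ^+ 2.
Proof.
move=> nsq1 nsq2 nsq3 r w [a [b [c [e Dw]]]] hr.
set s1 := sqrtC d1%:~R in Dw; set s2 := sqrtC d2%:~R in Dw.
have hs1 : s1 ^+ 2 = d1%:~R by rewrite sqrtCK.
have hs2 : s2 ^+ 2 = d2%:~R by rewrite sqrtCK.
pose D1 : rat := d1%:~R; pose D2 : rat := d2%:~R.
have [h0 h1 h2 h3] : [/\ a ^+ 2 + b ^+ 2 * D1 + c ^+ 2 * D2 + e ^+ 2 * D1 * D2 - r = 0,
   2 * (a * b + c * e * D2) = 0, 2 * (a * c + b * e * D1) = 0 & 2 * (a * e + b * c) = 0].
  apply: (@indep4 d1 d2 nsq1 nsq2 nsq3).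
  rewrite -/s1 -/s2 -(subrr (w ^+ 2)) -[X in _ = _ - X]hr Dw /D1 /D2; ring: hs1 hs2.
have two0 : (2 : rat) != 0 by [].
move/eqP: h1; rewrite mulf_eq0 (negPf two0) /= => /eqP h1.
move/eqP: h2; rewrite mulf_eq0 (negPf two0) /= => /eqP h2.
move/eqP: h3; rewrite mulf_eq0 (negPf two0) /= => /eqP h3.
have hr' : r = a ^+ 2 + b ^+ 2 * D1 + c ^+ 2 * D2 + e ^+ 2 * D1 * D2.
  by apply/eqP; rewrite eq_sym -subr_eq0 h0.
have D10 : D1 != 0.
  by apply/eqP => h; apply: nsq1; exists 0; rewrite -/D1 h; ring.
have D20 : D2 != 0.
  by apply/eqP => h; apply: nsq2; exists 0; rewrite -/D2 h; ring.
have [a0|a0] := eqVneq a 0.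
  subst a.
  have [b0|b0] := eqVneq b 0.
    subst b.
    have [c0|c0] := eqVneq c 0.
      subst c; exists (d1 * d2); split; first by rewrite !inE eqxx !orbT.
      by exists e; rewrite hr' /D1 /D2 intrM; ring.
    have e0 : e = 0.
      by move/eqP: h1; rewrite !mul0r add0r !mulf_eq0 (negPf c0) (negPf D20) orbF => /eqP.
    subst e; exists d2; split; first by rewrite !inE eqxx !orbT.
    by exists c; rewrite hr' /D2; ring.
  have c0 : c = 0.
    by move/eqP: h3; rewrite !mul0r add0r !mulf_eq0 (negPf b0) => /eqP.
  have e0 : e = 0.
    by move/eqP: h2; rewrite !mul0r add0r !mulf_eq0 (negPf b0) (negPf D10) orbF => /eqP.
  subst c e; exists d1; split; first by rewrite !inE eqxx !orbT.
  by exists b; rewrite hr' /D1; ring.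
have hb : b * (a ^+ 2 - c ^+ 2 * D2) = 0.
  rewrite -[RHS](_ : a * (a * b + c * e * D2) - c * D2 * (a * e + b * c) = 0); last first.
    by rewrite h1 h3; ring.
  ring.
have ac0 : a ^+ 2 - c ^+ 2 * D2 != 0.
  apply/eqP => h; apply: nsq2.
  have [c0|c0] := eqVneq c 0.
    by move/eqP: h; rewrite c0 expr0n /= mul0r subr0 expf_eq0 /= (negPf a0).
  apply: (@rat_sq_div _ a c c0); apply/eqP; rewrite -subr_eq0; apply/eqP; exact: h.
have b0 : b = 0 by move/eqP: hb; rewrite mulf_eq0 (negPf ac0) orbF => /eqP.
subst b.
have e0 : e = 0.
  by move/eqP: h3; rewrite mul0r addr0 mulf_eq0 (negPf a0) => /eqP.
subst e.
have c0 : c = 0.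
  by move/eqP: h2; rewrite !mul0r addr0 mulf_eq0 (negPf a0) => /eqP.
subst c; exists 1; split; first by rewrite !inE eqxx.
by exists a; rewrite hr'; ring.
Qed.

Lemma unit_sq (d : int) : ~ rat_square d -> forall (eps : algC) (N : rat) (m : nat),
  qnorm_is d eps 1 -> qnorm_is d (eps + 1) N -> sqfree_part N m ->
  exists a b : rat, eps * m%:R = (ratr a + ratr b * sqrtC d%:~R) ^+ 2.
Proof.
move=> nsq eps N m [a [b [De ha]]] [a' [b' [De' hN]]] [_ [k [k0 hk]]].
set s := sqrtC d%:~R in De De' *.
have hs : s ^+ 2 = d%:~R by rewrite sqrtCK.
have [ha' hb'] : a + 1 - a' = 0 /\ b - b' = 0.
  apply: (@indep1 d nsq); rewrite -/s.
  rewrite -(subrr (eps + 1)) {2}De' De; rewrite !rmorphB rmorphD rmorph1; ring.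
have Ea' : a' = a + 1 by apply/eqP; rewrite eq_sym -subr_eq0 ha'.
have Eb' : b' = b by apply/eqP; rewrite eq_sym -subr_eq0 hb'.
subst a' b'.
have hmkQ : (m%:R : rat) * k%:R ^+ 2 = 2 * a + 2.
  rewrite -natrX -natrM -hk hN; apply/eqP; rewrite -subr_eq0; apply/eqP.
  have -> : (a + 1) ^+ 2 - d%:~R * b ^+ 2 - (2 * a + 2) = (a ^+ 2 - d%:~R * b ^+ 2) - 1 by ring.
  by rewrite -ha subrr.
have hmk : (m%:R : algC) * k%:R ^+ 2 = 2 * ratr a + 2.
  have := congr1 (@ratr algC) hmkQ.
  by rewrite rmorphM rmorphXn !rmorph_nat rmorphD rmorphM rmorph_nat.
have ha2 : ratr a ^+ 2 - d%:~R * ratr b ^+ 2 = 1 :> algC.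
  have := congr1 (@ratr algC) (esym ha).
  by rewrite rmorphB rmorphM !rmorphXn rmorph_int rmorph1.
have k0' : (k%:R : algC) != 0 by rewrite pnatr_eq0 -lt0n.
exists ((a + 1) / k%:R), (b / k%:R).
rewrite !fmorph_div rmorphD rmorph1 rmorph_nat.
have -> : (m%:R : algC) = (2 * ratr a + 2) / k%:R ^+ 2.
  by rewrite -hmk mulfK // expf_neq0.
rewrite De.
have -> : ((ratr a + 1) / k%:R + ratr b / k%:R * s) ^+ 2 =
   ((ratr a + 1) + ratr b * s) ^+ 2 / k%:R ^+ 2 by field.
rewrite mulrA; congr (_ / _).
apply/eqP; rewrite -subr_eq0; apply/eqP.
have -> : (ratr a + ratr b * s) * (2 * ratr a + 2) - (ratr a + 1 + ratr b * s) ^+ 2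
   = (ratr a ^+ 2 - d%:~R * ratr b ^+ 2 - 1) - ratr b ^+ 2 * (s ^+ 2 - d%:~R) by ring.
by rewrite ha2 hs !subrr mulr0 subr0.
Qed.

Lemma Aint_sq (x : algC) : x ^+ 2 \in Aint -> x \in Aint.
Proof.
move=> hy.
pose p := minCpoly (x ^+ 2).
have hp : p \is a polyOver Num.int by [].
apply: (@root_monic_Aint (p \Po 'X^2)).
- by rewrite root_comp hornerXn root_minCpoly.
- rewrite monicE lead_coef_comp ?size_polyXn // lead_coefXn expr1n mulr1.
  exact: minCpoly_monic.
- by apply: polyOver_comp => //; apply: rpredX; apply: polyOverX.
Qed.

Lemma Aint_expz (x : algC) (n : int) : x \in Aint -> x^-1 \in Aint -> x ^ n \in Aint.
Proof.
move=> h1 h2; case: n => n; first exact: rpredX.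
by rewrite NegzE -exprz_inv; apply: rpredX.
Qed.

Lemma sq_powz (x y t : algC) (n : int) : x * y = t ^+ 2 -> x ^ n * y ^ n = (t ^ n) ^+ 2.
Proof.
move=> h; rewrite -expfzMl h.
have -> : t ^+ 2 = t ^ (2%:Z) by [].
by rewrite exprzAC.
Qed.

Lemma sqfree_pos N m : sqfree_part N m -> (m%:R : algC) != 0 /\ (m%:R : rat) != 0.
Proof. by move=> [[m0 _] _]; rewrite !pnatr_eq0 -!lt0n m0. Qed.

Theorem proposition5p1 (d1 d2 : int)
  (hd1 : 0 < d1) (hd2 : 0 < d2)
  (nsq1 : ~ rat_square d1) (nsq2 : ~ rat_square d2) (nsq3 : ~ rat_square (d1 * d2))
  (eps1 eps2 eps3 : algC)
  (he1 : fundamental_unit d1 eps1) (he2 : fundamental_unit d2 eps2)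
  (he3 : fundamental_unit (d1 * d2) eps3)
  (hn1 : qnorm_is d1 eps1 1) (hn2 : qnorm_is d2 eps2 1) (hn3 : qnorm_is (d1 * d2) eps3 1)
  (N1 N2 N3 : rat)
  (hN1 : qnorm_is d1 (eps1 + 1) N1) (hN2 : qnorm_is d2 (eps2 + 1) N2)
  (hN3 : qnorm_is (d1 * d2) (eps3 + 1) N3)
  (m1 m2 m3 : nat)
  (hm1 : sqfree_part N1 m1) (hm2 : sqfree_part N2 m2) (hm3 : sqfree_part N3 m3) :
  forall n1 n2 n3 : int,
    (exists u : algC, unit_of (biquad d1 d2) u /\
       eps1 ^ n1 * eps2 ^ n2 * eps3 ^ n3 = u ^+ 2)
    <->
    (exists c : int, c \in [:: 1; d1; d2; d1 * d2] /\
       exists q : rat, q != 0 /\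
         (m1%:R : rat) ^ n1 * (m2%:R : rat) ^ n2 * (m3%:R : rat) ^ n3 = c%:~R * q ^+ 2).
Proof.
move=> n1 n2 n3.
set s1 : algC := sqrtC d1%:~R; set s2 : algC := sqrtC d2%:~R.
have d1C : 0 <= (d1%:~R : algC) by rewrite ler0z ltW.
have d2C : 0 <= (d2%:~R : algC) by rewrite ler0z ltW.
have hs12 : sqrtC (d1 * d2)%:~R = s1 * s2 by rewrite intrM sqrtCM.
have [a1 [b1 E1]] := @unit_sq d1 nsq1 _ _ _ hn1 hN1 hm1.
have [a2 [b2 E2]] := @unit_sq d2 nsq2 _ _ _ hn2 hN2 hm2.
have [a3 [b3 E3]] := @unit_sq (d1 * d2) nsq3 _ _ _ hn3 hN3 hm3.
rewrite hs12 in E3.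
set t1 := ratr a1 + _ in E1; set t2 := ratr a2 + _ in E2; set t3 := ratr a3 + _ in E3.
have Kt1 : biquad d1 d2 t1 by exists a1, b1, 0, 0; rewrite /t1 /s1; ring.
have Kt2 : biquad d1 d2 t2 by exists a2, 0, b2, 0; rewrite /t2 /s2; ring.
have Kt3 : biquad d1 d2 t3 by exists a3, 0, 0, b3; rewrite /t3 /s1 /s2; ring.
have [m1C m1Q] := sqfree_pos _ _ hm1.
have [m2C m2Q] := sqfree_pos _ _ hm2.
have [m3C m3Q] := sqfree_pos _ _ hm3.
have e0 d e : fundamental_unit d e -> e != 0.
  by move=> [_ h _]; apply: lt0r_neq0; apply: lt_trans h; apply: ltr01.
have t0 (e t : algC) m : e != 0 -> (m%:R : algC) != 0 -> e * m%:R = t ^+ 2 -> t != 0.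
  by move=> he hm ht; apply/eqP => t0; move/eqP: ht; rewrite t0 expr0n /= mulf_eq0 (negPf he) (negPf hm).
have t10 := t0 _ _ _ (e0 _ _ he1) m1C E1.
have t20 := t0 _ _ _ (e0 _ _ he2) m2C E2.
have t30 := t0 _ _ _ (e0 _ _ he3) m3C E3.
set Th := t1 ^ n1 * t2 ^ n2 * t3 ^ n3.
set M : rat := (m1%:R : rat) ^ n1 * (m2%:R : rat) ^ n2 * (m3%:R : rat) ^ n3.
set P := eps1 ^ n1 * eps2 ^ n2 * eps3 ^ n3.
have KTh : biquad d1 d2 Th.
  by apply: K_mul; [apply: K_mul|]; apply: (@K_exprz d1 d2 nsq1 nsq2 nsq3).
have Th0 : Th != 0 by rewrite !mulf_neq0 // expfz_neq0.
have M0 : M != 0 by rewrite !mulf_neq0 // expfz_neq0.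
have M0C : ratr M != 0 :> algC by rewrite fmorph_eq0.
have hPM : P * ratr M = Th ^+ 2.
  rewrite /M !rmorphM !fmorphXz !rmorph_nat.
  rewrite /Th !exprMn -(sq_powz _ _ _ n1 E1) -(sq_powz _ _ _ n2 E2) -(sq_powz _ _ _ n3 E3) /P; ring.
split.
- move=> [u [[Ku u0 ua uia] hu]].
  have hw : ratr M = (Th * u^-1) ^+ 2.
    have hu' : P = u ^+ 2 by exact: hu.
    move: hPM; rewrite hu' => hPM'; rewrite exprMn -hPM'; field; exact: u0.
  have [c [hc [q hq]]] := @key_sq d1 d2 nsq1 nsq2 nsq3 M _ (K_mul _ _ _ _ KTh (@K_inv d1 d2 nsq1 nsq2 nsq3 _ Ku)) hw.
  exists c; split => //; exists q; split => //.
  apply/eqP => q0; move: M0; rewrite -/M hq q0 expr0n /= mulr0 eqxx //.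
- move=> [c [hc [q [q0 hMq]]]].
  have [sc [Ksc [hsc sc0]]] : exists sc, [/\ biquad d1 d2 sc, sc ^+ 2 = c%:~R & sc != 0].
    move: hc; rewrite !inE => /or4P[] /eqP ->.
    + by exists 1; split; [exists 1, 0, 0, 0; ring | rewrite expr1n | exact: oner_neq0].
    + exists s1; split; [exact: K_s1 | by rewrite sqrtCK |].
      by rewrite sqrtC_eq0 intr_eq0 gt_eqF.
    + exists s2; split; [exact: K_s2 | by rewrite sqrtCK |].
      by rewrite sqrtC_eq0 intr_eq0 gt_eqF.
    + exists (s1 * s2); split; [exact: K_s12 | by rewrite exprMn !sqrtCK intrM |].
      by rewrite mulf_neq0 // sqrtC_eq0 intr_eq0 gt_eqF.
  have q0C : ratr q != 0 :> algC by rewrite fmorph_eq0.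
  have hMr : (c%:~R : algC) * ratr q ^+ 2 = ratr M.
    by rewrite -/M hMq rmorphM rmorph_int rmorphXn.
  set u := Th * (sc * ratr q)^-1.
  have hu2 : u ^+ 2 = P.
    rewrite /u exprMn exprVn (exprMn _ sc) hsc hMr -hPM mulfK //.
  have [[_ _ A1 Ai1] _ _] := he1.
  have [[_ _ A2 Ai2] _ _] := he2.
  have [[_ _ A3 Ai3] _ _] := he3.
  have PA : P \in Aint.
    by rewrite /P; apply: rpredM; [apply: rpredM|];
      by apply: Aint_expz.
  have PiA : P^-1 \in Aint.
    rewrite /P !invfM !invr_expz; apply: rpredM; [apply: rpredM|];
      by apply: Aint_expz.
  exists u; split; last by rewrite hu2.
  split.
  + apply: K_mul => //; apply: (@K_inv d1 d2 nsq1 nsq2 nsq3); apply: K_mul => //; exact: K_rat.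
  + by rewrite /u mulf_neq0 // invr_eq0 mulf_neq0.
  + by apply: Aint_sq; rewrite hu2.
  + by apply: Aint_sq; rewrite exprVn hu2.
Qed.
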